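(* For every sequent $\Gamma\Rightarrow\Delta$: if $\Gamma\Rightarrow\Delta$ is provable in $\mathsf{Grz}_\infty$, then $\mathsf{Grz_{Seq}}\vdash\Gamma\Rightarrow\Delta$.
   Context: Formulas are built from $\bot$ and atomic propositions using $\to$ and $\Box$. A sequent is $\Gamma\Rightarrow\Delta$ with $\Gamma,\Delta$ finite multisets of formulas; $\Box\Pi$ denotes the multiset $\{\Box B:B\in\Pi\}$. Common rules: $(\to_L)$ from $\Gamma,B\Rightarrow\Delta$ and $\Gamma\Rightarrow A,\Delta$ infer $\Gamma,A\to B\Rightarrow\Delta$; $(\to_R)$ from $\Gamma,A\Rightarrow B,\Delta$ infer $\Gamma\Rightarrow A\to B,\Delta$; $(\mathsf{refl})$ from $\Gamma,B,\Box B\Rightarrow\Delta$ infer $\Gamma,\Box B\Rightarrow\Delta$. The finite-proof calculus $\mathsf{Grz_{Seq}}$ has initial sequents $\Gamma,A\Rightarrow A,\Delta$ (any $A$) and $\Gamma,\bot\Rightarrow\Delta$, the rules $(\to_L),(\to_R),(\mathsf{refl})$ and $(\Box_{\mathsf{Grz}})$: from $\Box\Pi,\Box(A\to\Box A)\Rightarrow A$ infer $\Gamma,\Box\Pi\Rightarrow\Box A,\Delta$. The calculus $\mathsf{Grz}_\infty$ has initial sequents $\Gamma,p\Rightarrow p,\Delta$ ($p$ atomic) and $\Gamma,\bot\Rightarrow\Delta$, the rules $(\to_L),(\to_R),(\mathsf{refl})$ and $(\Box)$: from left premise $\Gamma,\Box\Pi\Rightarrow A,\Delta$ and right premise $\Box\Pi\Rightarrow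 A$ infer $\Gamma,\Box\Pi\Rightarrow\Box A,\Delta$. Proofs in $\mathsf{Grz}_\infty$ are $\infty$-proofs: possibly infinite trees of sequents built by these rules, with leaves labelled by initial sequents, in which every infinite branch passes through a right premise of $(\Box)$ infinitely often; a sequent is provable if it labels the root of an $\infty$-proof. *)

(* Defs.v *)
(* Sequents are pairs of lists; multisets are lists up to Permutation. *)
From Stdlib Require Import List Permutation.
Import ListNotations.

Inductive form : Type :=
| Bot : form
| Var : nat -> form
| Imp : form -> form -> form
| Box : form -> form.

Definition sequent := (list form * list form)%type.

Definition boxes (Pi : list form) : list form := map Box Pi.

Inductive GrzSeq : list form -> list form -> Prop :=
| gs_init : forall G D G' D' A,
    Permutation G (A :: G') -> Permutation D (A :: D') -> GrzSeq G D
| gs_bot : forall G D G',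
    Permutation G (Bot :: G') -> GrzSeq G D
| gs_impL : forall G D G' A B,
    Permutation G (Imp A B :: G') ->
    GrzSeq (B :: G') D -> GrzSeq G' (A :: D) -> GrzSeq G D
| gs_impR : forall G D D' A B,
    Permutation D (Imp A B :: D') ->
    GrzSeq (A :: G) (B :: D') -> GrzSeq G D
| gs_refl : forall G D G' B,
    Permutation G (Box B :: G') ->
    GrzSeq (B :: Box B :: G') D -> GrzSeq G D
| gs_boxGrz : forall G D G' D' Pi A,
    Permutation G (boxes Pi ++ G') -> Permutation D (Box A :: D') ->
    GrzSeq (boxes Pi ++ [Box (Imp A (Box A))]) [A] -> GrzSeq G D.

Inductive rule : Type := Rinit | Rbot | RimpL | RimpR | Rrefl | Rbox.

(* A node: its sequent, the rule applied, and the list of premises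
   (for Rbox: first child = left premise, second child = right premise). *)
CoInductive ptree : Type :=
| node : sequent -> rule -> list ptree -> ptree.

Definition seq_of (t : ptree) : sequent := match t with node s _ _ => s end.
Definition rule_of (t : ptree) : rule := match t with node _ r _ => r end.
Definition children (t : ptree) : list ptree := match t with node _ _ c => c end.

Definition seq_perm (s : sequent) (G D : list form) : Prop :=
  Permutation (fst s) G /\ Permutation (snd s) D.

Definition local_ok (t : ptree) : Prop :=
  let '(G, D) := seq_of t in
  match rule_of t with
  | Rinit => children t = [] /\
      exists p G' D', Permutation G (Var p :: G') /\ Permutation D (Var p :: D')
  | Rbot => children t = [] /\ exists G', Permutation G (Bot :: G')
  | RimpL => exists t1 t2 A B G', children t = [t1; t2] /\
      Permutation G (Imp A B :: G') /\
      seq_perm (seq_of t1) (B :: G') D /\ seq_perm (seq_of t2) G' (A :: D)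
  | RimpR => exists t1 A B D', children t = [t1] /\
      Permutation D (Imp A B :: D') /\ seq_perm (seq_of t1) (A :: G) (B :: D')
  | Rrefl => exists t1 B G', children t = [t1] /\
      Permutation G (Box B :: G') /\ seq_perm (seq_of t1) (B :: Box B :: G') D
  | Rbox => exists t1 t2 Pi A G' D', children t = [t1; t2] /\
      Permutation G (G' ++ boxes Pi) /\ Permutation D (Box A :: D') /\
      seq_perm (seq_of t1) (G' ++ boxes Pi) (A :: D') /\
      seq_perm (seq_of t2) (boxes Pi) [A]
  end.

CoInductive locally_correct : ptree -> Prop :=
| lc_intro : forall t, local_ok t ->
    (forall c, In c (children t) -> locally_correct c) -> locally_correct t.

Definition is_branch (t : ptree) (b : nat -> ptree) (d : nat -> nat) : Prop :=
  b 0 = t /\ forall n, nth_error (children (b n)) (d n) = Some (b (S n)).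

Definition branch_condition (t : ptree) : Prop :=
  forall b d, is_branch t b d ->
    forall N, exists n, N <= n /\ rule_of (b n) = Rbox /\ d n = 1.

Definition inf_proof (t : ptree) : Prop := locally_correct t /\ branch_condition t.

Definition GrzInf_provable (G D : list form) : Prop :=
  exists t, inf_proof t /\ seq_perm (seq_of t) G D.

(* Main.v *)
Require Import Defs.
From Stdlib Require Import List Permutation Classical ClassicalEpsilon Lia.
Import ListNotations.

Lemma gs_perm : forall G D, GrzSeq G D -> forall G2 D2,
  Permutation G G2 -> Permutation D D2 -> GrzSeq G2 D2.
Proof.
  intros G D H; induction H; intros G2 D2 HG HD.
  - apply gs_init with G' D' A.
    + eapply Permutation_trans; [apply Permutation_sym; exact HG| exact H].
    + eapply Permutation_trans; [apply Permutation_sym; exact HD| exact H0].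
  - apply gs_bot with G'.
    eapply Permutation_trans; [apply Permutation_sym; exact HG| exact H].
  - apply gs_impL with G' A B; [eapply Permutation_trans; [apply Permutation_sym; exact HG| exact H]| |].
    + apply IHGrzSeq1; auto.
    + apply IHGrzSeq2; auto.
  - apply gs_impR with D' A B; [eapply Permutation_trans; [apply Permutation_sym; exact HD| exact H]|].
    apply IHGrzSeq; auto.
  - apply gs_refl with G' B; [eapply Permutation_trans; [apply Permutation_sym; exact HG| exact H]|].
    apply IHGrzSeq; auto.
  - apply gs_boxGrz with G' D' Pi A; auto.
    + eapply Permutation_trans; [apply Permutation_sym; exact HG| exact H].
    + eapply Permutation_trans; [apply Permutation_sym; exact HD| exact H0].
Qed.

Lemma gs_weakL : forall G D, GrzSeq G D -> forall X, GrzSeq (X :: G) D.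
Proof.
  intros G D H; induction H; intros X.
  - eapply gs_init with (G' := X :: G'); eauto.
    eapply Permutation_trans; [apply perm_skip; eauto| apply perm_swap].
  - eapply gs_bot with (G' := X :: G').
    eapply Permutation_trans; [apply perm_skip; eauto| apply perm_swap].
  - eapply gs_impL with (G' := X :: G').
    + eapply Permutation_trans; [apply perm_skip; eauto| apply perm_swap].
    + eapply gs_perm; [apply IHGrzSeq1| apply perm_swap| apply Permutation_refl].
    + apply IHGrzSeq2.
  - eapply gs_impR; eauto.
    eapply gs_perm; [apply IHGrzSeq| apply perm_swap| apply Permutation_refl].
  - eapply gs_refl with (G' := X :: G').
    + eapply Permutation_trans; [apply perm_skip; eauto| apply perm_swap].
    + eapply gs_perm; [apply (IHGrzSeq X)| |apply Permutation_refl].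
      eapply Permutation_trans; [apply perm_swap|]. apply perm_skip. apply perm_swap.
  - eapply gs_boxGrz with (G' := X :: G'); eauto.
    eapply Permutation_trans; [apply perm_skip; eauto| apply Permutation_middle].
Qed.

Lemma gs_weakR : forall G D, GrzSeq G D -> forall X, GrzSeq G (X :: D).
Proof.
  intros G D H; induction H; intros X.
  - eapply gs_init with (D' := X :: D'); eauto.
    eapply Permutation_trans; [apply perm_skip; eauto| apply perm_swap].
  - eapply gs_bot; eauto.
  - eapply gs_impL; eauto.
    eapply gs_perm; [apply IHGrzSeq2| apply Permutation_refl| apply perm_swap].
  - eapply gs_impR with (D' := X :: D').
    + eapply Permutation_trans; [apply perm_skip; eauto| apply perm_swap].
    + eapply gs_perm; [apply IHGrzSeq| apply Permutation_refl| apply perm_swap].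
  - eapply gs_refl; eauto.
  - eapply gs_boxGrz with (D' := X :: D'); eauto.
    eapply Permutation_trans; [apply perm_skip; eauto| apply perm_swap].
Qed.

Lemma chain_exists : forall (X : Type) (R : X -> X -> Prop) x0, ~ Acc R x0 ->
  exists f : nat -> X, f 0 = x0 /\ forall n, R (f (S n)) (f n).
Proof.
  intros X R x0 H0.
  assert (nx : forall x, ~ Acc R x -> {y | R y x /\ ~ Acc R y}).
  { intros x Hx; apply constructive_indefinite_description.
    apply NNPP; intro H'; apply Hx; constructor; intros y Hy.
    apply NNPP; intro; apply H'; eauto. }
  set (g := fix g (n : nat) : {x | ~ Acc R x} := match n with
    | 0 => exist _ x0 H0
    | S m => exist _ (proj1_sig (nx _ (proj2_sig (g m))))
                     (proj2 (proj2_sig (nx _ (proj2_sig (g m))))) end).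
  exists (fun n => proj1_sig (g n)); split; [reflexivity|].
  intros n; simpl. exact (proj1 (proj2_sig (nx _ (proj2_sig (g n))))).
Qed.

Definition grzf (B : form) : form := Imp B (Box B).

Definition step (S : list form) (y x : ptree * list form) : Prop :=
  (exists i, nth_error (children (fst x)) i = Some (fst y) /\ snd y = snd x /\
      (rule_of (fst x) = Rbox -> i = 0))
  \/ (rule_of (fst x) = Rbox /\ nth_error (children (fst x)) 1 = Some (fst y) /\
      exists z, snd y = z :: snd x /\ ~ In z (snd x) /\ In z S).

Lemma acc_root : forall SS t, branch_condition t -> Acc (step SS) (t, []).
Proof.
  intros SS t Hbc. apply NNPP; intro Hn.
  destruct (chain_exists _ _ _ Hn) as [f [H0 Hf]].
  set (b := fun n => fst (f n)). set (K := fun n => snd (f n)).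
  assert (Hd : forall n, exists i, nth_error (children (b n)) i = Some (b (S n)) /\
     (rule_of (b n) = Rbox -> i = 1 -> length (K (S n)) = S (length (K n)))).
  { intro n; destruct (Hf n) as [[i [H1 [H2 H3]]] | [H1 [H2 [z [H3 [H4 H5]]]]]].
    - exists i; split; [exact H1|]. intros Hr Hi; specialize (H3 Hr); lia.
    - exists 1; split; [exact H2|]. intros ? ?. unfold K; rewrite H3; reflexivity. }
  set (d := fun n => proj1_sig (constructive_indefinite_description _ (Hd n))).
  assert (Hbr : is_branch t b d).
  { split; [unfold b; rewrite H0; reflexivity|].
    intro n; unfold d; exact (proj1 (proj2_sig (constructive_indefinite_description _ (Hd n)))). }
  assert (Hinv : forall n, NoDup (K n) /\ incl (K n) SS).
  { induction n.
    - unfold K; rewrite H0; simpl; split; [constructor| intros a []].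
    - destruct IHn as [IH1 IH2].
      destruct (Hf n) as [[i [H1 [H2 H3]]] | [H1 [H2 [z [H3 [H4 H5]]]]]].
      + unfold K in *; rewrite H2; auto.
      + unfold K in *; rewrite H3; split; [constructor; auto|].
        intros a [<-|Ha]; auto. }
  assert (Hmono : forall n, length (K n) <= length (K (S n))).
  { intro n; destruct (Hf n) as [[i [H1 [H2 H3]]] | [H1 [H2 [z [H3 [H4 H5]]]]]];
    unfold K; [rewrite H2 | rewrite H3; simpl]; lia. }
  assert (Hmono2 : forall n m, n <= m -> length (K n) <= length (K m)).
  { intros n m Hnm; induction Hnm; [lia|]. specialize (Hmono m); lia. }
  assert (Hgrow : forall k, exists N, k <= length (K N)).
  { induction k.
    - exists 0; lia.
    - destruct IHk as [N HN].
      destruct (Hbc b d Hbr N) as [n [Hn1 [Hn2 Hn3]]].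
      exists (S n).
      assert (E : length (K (S n)) = S (length (K n))).
      { exact (proj2 (proj2_sig (constructive_indefinite_description _ (Hd n))) Hn2 Hn3). }
      specialize (Hmono2 _ _ Hn1); lia. }
  destruct (Hgrow (S (length SS))) as [N HN].
  destruct (Hinv N) as [H1 H2].
  pose proof (NoDup_incl_length H1 H2). lia.
Qed.

Fixpoint sub (f : form) : list form :=
  match f with
  | Imp a b => f :: sub a ++ sub b
  | Box a => f :: sub a
  | _ => [f]
  end.

Lemma sub_refl : forall f, In f (sub f).
Proof. destruct f; simpl; auto. Qed.

Lemma sub_trans : forall f g, In g (sub f) -> incl (sub g) (sub f).
Proof.
  induction f; simpl; intros g Hg.
  - destruct Hg as [<-|[]]; apply incl_refl.
  - destruct Hg as [<-|[]]; apply incl_refl.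
  - destruct Hg as [<-|Hg]; [apply incl_refl|].
    apply in_app_or in Hg; destruct Hg as [Hg|Hg].
    + intros x Hx; right; apply in_or_app; left; eapply IHf1; eauto.
    + intros x Hx; right; apply in_or_app; right; eapply IHf2; eauto.
  - destruct Hg as [<-|Hg]; [apply incl_refl|].
    intros x Hx; right; eapply IHf; eauto.
Qed.

Lemma sf_child : forall (SF : list form) s X Y, seq_perm s X Y ->
  (forall f, In f X -> In f SF) -> (forall f, In f Y -> In f SF) ->
  forall f, In f (fst s ++ snd s) -> In f SF.
Proof.
  intros SF s X Y [H1 H2] HX HY f Hf. apply in_app_or in Hf as [Hf|Hf].
  - apply HX; eapply Permutation_in; eauto.
  - apply HY; eapply Permutation_in; eauto.
Qed.

Lemma gs_child : forall K s X Y, seq_perm s X Y ->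
  GrzSeq (boxes K ++ fst s) (snd s) -> GrzSeq (boxes K ++ X) Y.
Proof.
  intros K s X Y [H1 H2] H. eapply gs_perm; [exact H| |exact H2].
  apply Permutation_app_head; exact H1.
Qed.

Lemma in_perm_cons : forall (l l' : list form) a f, Permutation l (a :: l') ->
  In f l' -> In f l.
Proof. intros. eapply Permutation_in; [apply Permutation_sym; eauto| right; auto]. Qed.

Lemma in_perm_hd : forall (l l' : list form) a, Permutation l (a :: l') -> In a l.
Proof. intros. eapply Permutation_in; [apply Permutation_sym; eauto| left; auto]. Qed.

Lemma form_eq_dec : forall x y : form, {x = y} + {x <> y}.
Proof. decide equality; apply PeanoNat.Nat.eq_dec. Qed.

Lemma main (SF : list form)
  (HSF1 : forall a b, In (Imp a b) SF -> In a SF /\ In b SF)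
  (HSF2 : forall a, In (Box a) SF -> In a SF) :
  forall p, Acc (step (map grzf SF)) p -> locally_correct (fst p) ->
  (forall f, In f (fst (seq_of (fst p)) ++ snd (seq_of (fst p))) -> In f SF) ->
  GrzSeq (boxes (snd p) ++ fst (seq_of (fst p))) (snd (seq_of (fst p))).
Proof.
  intros p Hacc; induction Hacc as [[t K] _ IH]; simpl. intros Hlc Hsf.
  destruct t as [[Gt Dt] r cs]. simpl in *.
  inversion Hlc as [t0 Hok Hch Heq]; subst t0.
  assert (HG : forall f, In f Gt -> In f SF) by (intros; apply Hsf, in_or_app; auto).
  assert (HD : forall f, In f Dt -> In f SF) by (intros; apply Hsf, in_or_app; auto).
  unfold local_ok in Hok; simpl in Hok.
  destruct r; simpl in Hch.
  - destruct Hok as [_ [p [G' [D' [H1 H2]]]]].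
    apply gs_init with (boxes K ++ G') D' (Var p); auto.
    eapply Permutation_trans; [apply Permutation_app_head; exact H1|].
    apply Permutation_sym, Permutation_middle.
  - destruct Hok as [_ [G' H1]].
    apply gs_bot with (boxes K ++ G').
    eapply Permutation_trans; [apply Permutation_app_head; exact H1|].
    apply Permutation_sym, Permutation_middle.
  - destruct Hok as [t1 [t2 [A [B [G' [Hc [H1 [H2 H3]]]]]]]]. subst cs.
    assert (HAB := HSF1 A B (HG _ (in_perm_hd _ _ _ H1))).
    apply gs_impL with (boxes K ++ G') A B.
    + eapply Permutation_trans; [apply Permutation_app_head; exact H1|].
      apply Permutation_sym, Permutation_middle.
    + apply gs_perm with (boxes K ++ B :: G') Dt; [| apply Permutation_sym, Permutation_middle| auto].
      apply gs_child with (seq_of t1); auto.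
      apply (IH (t1, K)); simpl.
      * left; exists 0; repeat split; discriminate.
      * apply Hch; simpl; auto.
      * eapply sf_child; eauto.
        intros f [<-|Hf]; [tauto| apply HG; eapply in_perm_cons; eauto].
    + apply gs_child with (seq_of t2); auto.
      apply (IH (t2, K)); simpl.
      * left; exists 1; repeat split; discriminate.
      * apply Hch; simpl; auto.
      * eapply sf_child; eauto.
        -- intros f Hf; apply HG; eapply in_perm_cons; eauto.
        -- intros f [<-|Hf]; [tauto| auto].
  - destruct Hok as [t1 [A [B [D' [Hc [H1 H2]]]]]]. subst cs.
    assert (HAB := HSF1 A B (HD _ (in_perm_hd _ _ _ H1))).
    apply gs_impR with D' A B; auto.
    apply gs_perm with (boxes K ++ A :: Gt) (B :: D'); [| apply Permutation_sym, Permutation_middle| auto].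
    apply gs_child with (seq_of t1); auto.
    apply (IH (t1, K)); simpl.
    + left; exists 0; repeat split; discriminate.
    + apply Hch; simpl; auto.
    + eapply sf_child; eauto.
      * intros f [<-|Hf]; [tauto| auto].
      * intros f [<-|Hf]; [tauto| apply HD; eapply in_perm_cons; eauto].
  - destruct Hok as [t1 [B [G' [Hc [H1 H2]]]]]. subst cs.
    assert (HB := HSF2 B (HG _ (in_perm_hd _ _ _ H1))).
    apply gs_refl with (boxes K ++ G') B.
    + eapply Permutation_trans; [apply Permutation_app_head; exact H1|].
      apply Permutation_sym, Permutation_middle.
    + apply gs_perm with (boxes K ++ B :: Box B :: G') Dt; auto.
      2:{ eapply Permutation_trans; [apply Permutation_sym, Permutation_middle|].
          apply perm_skip, Permutation_sym, Permutation_middle. }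
      apply gs_child with (seq_of t1); auto.
      apply (IH (t1, K)); simpl.
      * left; exists 0; repeat split; discriminate.
      * apply Hch; simpl; auto.
      * eapply sf_child; eauto.
        intros f [<-|[<-|Hf]]; [tauto| eapply HG, in_perm_hd; eauto| apply HG; eapply in_perm_cons; eauto].
  - destruct Hok as [t1 [t2 [Pi [A [G' [D' [Hc [H1 [H2 [H3 H4]]]]]]]]]]. subst cs.
    assert (HA := HSF2 A (HD _ (in_perm_hd _ _ _ H2))).
    destruct (in_dec form_eq_dec (grzf A) K) as [Hin|Hnin].
    +
      assert (Hl : GrzSeq (boxes K ++ G' ++ boxes Pi) (A :: D')).
      { apply gs_child with (seq_of t1); auto.
        apply (IH (t1, K)); simpl.
        - left; exists 0; repeat split.
        - apply Hch; simpl; auto.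
        - eapply sf_child; eauto.
          + intros f Hf; apply HG; eapply Permutation_in; [apply Permutation_sym; eauto| auto].
          + intros f [<-|Hf]; [auto| apply HD; eapply in_perm_cons; eauto]. }
      apply in_split in Hin as [K1 [K2 HK]]. subst K.
      unfold boxes in *; rewrite map_app in *; simpl in *.
      set (R := map Box K1 ++ map Box K2 ++ Gt).
      assert (HP : Permutation ((map Box K1 ++ Box (grzf A) :: map Box K2) ++ Gt) (Box (grzf A) :: R)).
      { unfold R; rewrite <- app_assoc; simpl.
        apply Permutation_sym, Permutation_middle. }
      apply gs_refl with R (grzf A); [exact HP|].
      apply gs_impL with (Box (grzf A) :: R) A (Box A); [apply Permutation_refl| |].
      * apply gs_init with (Box (grzf A) :: R) D' (Box A); auto.
      * apply gs_perm with ((map Box K1 ++ Box (grzf A) :: map Box K2) ++ G' ++ boxes Pi) (Box A :: A :: D').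
        -- apply gs_weakR; exact Hl.
        -- eapply Permutation_trans; [|exact HP]. apply Permutation_app_head.
           apply Permutation_sym; exact H1.
        -- eapply Permutation_trans; [apply perm_swap|]. apply perm_skip, Permutation_sym, H2.
    +
      assert (Hr : GrzSeq (boxes (grzf A :: K) ++ boxes Pi) [A]).
      { apply gs_child with (seq_of t2); auto.
        apply (IH (t2, grzf A :: K)); simpl.
        - right; repeat split; auto. exists (grzf A); repeat split; auto.
          apply in_map; auto.
        - apply Hch; simpl; auto.
        - eapply sf_child; eauto.
          + intros f Hf; apply HG; eapply Permutation_in; [apply Permutation_sym; eauto| apply in_or_app; auto].
          + intros f [<-|[]]; auto. }
      apply gs_boxGrz with G' D' (K ++ Pi) A; auto.
      * unfold boxes; rewrite map_app, <- app_assoc. apply Permutation_app_head.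
        eapply Permutation_trans; [exact H1| apply Permutation_app_comm].
      * eapply gs_perm; [exact Hr| |apply Permutation_refl].
        unfold boxes; simpl; rewrite map_app. apply Permutation_cons_append.
Qed.

Theorem theorem3p6 : forall (G D : list form),
  GrzInf_provable G D -> GrzSeq G D.
Proof.
  intros G D [t [[Hlc Hbc] Hs]].
  set (SF := flat_map sub (fst (seq_of t) ++ snd (seq_of t))).
  assert (Hcl : forall a f, In a SF -> In f (sub a) -> In f SF).
  { intros a f Ha Hf. unfold SF in *. apply in_flat_map in Ha as [x [Hx Ha]].
    apply in_flat_map; exists x; split; auto. eapply sub_trans; eauto. }
  assert (HSF1 : forall a b, In (Imp a b) SF -> In a SF /\ In b SF).
  { intros a b H; split; eapply Hcl; eauto; simpl; right; apply in_or_app;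
    [left|right]; apply sub_refl. }
  assert (HSF2 : forall a, In (Box a) SF -> In a SF).
  { intros a H; eapply Hcl; eauto; simpl; right; apply sub_refl. }
  pose proof (main SF HSF1 HSF2 (t, []) (acc_root _ t Hbc) Hlc) as Hm.
  simpl in Hm.
  apply (gs_child [] (seq_of t)); auto.
  apply Hm. intros f Hf. unfold SF. apply in_flat_map; exists f; split; auto; apply sub_refl.
Qed.
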